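(* Let $(\mathcal A,d)$ be a DGA and let $a,b_1,\dots,b_n\in\mathcal A$ be closed with $|a|$ even and each $a\wedge b_i$ exact. The indeterminacy $\{x-x' : x,x'\in\langle a;b_1,\dots,b_n\rangle\}$ of the $a$-Massey product $\langle a;b_1,\dots,b_n\rangle$ is a subset of $$\sum_{j=1}^n\langle a;b_1,\dots,\widehat{b_j},\dots,b_n\rangle\wedge H(\mathcal A),$$ where $\widehat{b_j}$ means $b_j$ is omitted. In particular, the indeterminacy of $\langle a;b_1,b_2,b_3\rangle$ is a subset of $$\langle b_1,a,b_2\rangle\wedge H(\mathcal A)+\langle b_2,a,b_3\rangle\wedge H(\mathcal A)+\langle b_3,a,b_1\rangle\wedge H(\mathcal A),$$ where $\langle\cdot,\cdot,\cdot\rangle$ denotes the ordinary triple Massey product.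
   Context: A DGA is a graded-commutative differential graded algebra over $\mathbb R$; $|x|$ denotes degree and $\overline{x}=(-1)^{|x|}x$. Given closed $a,b_1,\dots,b_n$ with $|a|$ even and each $a\wedge b_i$ exact, the $a$-Massey product is $\langle a;b_1,\dots,b_n\rangle=\{[\sum_{i=1}^n\overline{\xi_1}\wedge\cdots\wedge\overline{\xi_{i-1}}\wedge b_i\wedge\xi_{i+1}\wedge\cdots\wedge\xi_n] : d\xi_i=a\wedge b_i\}\subset H(\mathcal A)$. For closed $x_1,x_2,x_3$ with $x_1\wedge x_2$, $x_2\wedge x_3$ exact, the triple Massey product is $\langle x_1,x_2,x_3\rangle=\{[x_1\wedge x_{2,3}+(-1)^{|x_1|+1}x_{1,2}\wedge x_3] : dx_{1,2}=x_1\wedge x_2,\ dx_{2,3}=x_2\wedge x_3\}$. For subsets $S,T\subset H(\mathcal A)$, $S\wedge T$ and $S+T$ denote the sets of products and sums of elements. *)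

(* Defs.v *)
From HB Require Import structures.
From mathcomp Require Import all_boot all_order all_algebra.
From mathcomp Require Import Rstruct.
From Stdlib Require Rdefinitions.
Notation R := Rdefinitions.R.

Set Implicit Arguments.
Unset Strict Implicit.
Unset Printing Implicit Defensive.

Import Order.TTheory GRing.Theory Num.Theory.
Local Open Scope ring_scope.

(* The carrier A is an (associative, unital) R-algebra; [deg k x] means
   "x is homogeneous of degree k", i.e. x \in A^k.  The axioms say that
   A = \bigoplus_k A^k as R-vector spaces, that the product is graded and
   graded-commutative, and that d is an R-linear derivation of degree +1
   with d \o d = 0. *)
Record is_DGA (A : algType R) (deg : nat -> A -> Prop) (d : A -> A) : Prop := {
  deg0 : forall k, deg k 0;
  degD : forall k x y, deg k x -> deg k y -> deg k (x + y);
  degZ : forall k (c : R) x, deg k x -> deg k (c *: x);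
  deg_decomp : forall x : A, exists (N : nat) (c : nat -> A),
      (forall k, deg k (c k)) /\ x = \sum_(k < N) c k;
  deg_indep : forall (N : nat) (c : nat -> A), (forall k, deg k (c k)) ->
      \sum_(k < N) c k = 0 -> forall k, (k < N)%N -> c k = 0;
  deg1 : deg 0 1;
  degM : forall p q x y, deg p x -> deg q y -> deg (p + q) (x * y);
  gcomm : forall p q x y, deg p x -> deg q y ->
      x * y = (-1) ^+ (p * q) * (y * x);
  d_linear : forall (c : R) x y, d (c *: x + y) = c *: d x + d y;
  d_deg : forall k x, deg k x -> deg k.+1 (d x);
  d_d : forall x, d (d x) = 0;
  d_leibniz : forall p x y, deg p x ->
      d (x * y) = d x * y + (-1) ^+ p * (x * d y)
}.

Section DGADefs.
Variables (A : algType R) (deg : nat -> A -> Prop) (d : A -> A).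

Definition is_closed (x : A) : Prop := d x = 0.
Definition is_exact (x : A) : Prop := exists y, x = d y.
(* u and v are closed representatives of the same cohomology class iff
   u - v is exact; cohomology classes are handled through representatives. *)
Definition cohom (u v : A) : Prop := is_exact (u - v).

(* [in_degm1 m x] : x \in A^{m-1}  (with A^{-1} = 0). *)
Definition in_degm1 (m : nat) (x : A) : Prop :=
  if m is k.+1 then deg k x else x = 0.

(* \bar x = (-1)^{|x|} x for x \in A^{m-1}. *)
Definition bar_m1 (m : nat) (x : A) : A := (-1) ^+ m.-1 * x.

(* u represents an element of the a-Massey product <a; b_1, ..., b_n>,
   where |a| = da and |b_i| = db i; xi i \in A^{|a|+|b_i|-1}. *)
Definition amassey_rep (n : nat) (a : A) (da : nat)
    (b : 'I_n -> A) (db : 'I_n -> nat) (u : A) : Prop :=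
  exists xi : 'I_n -> A,
    (forall i, in_degm1 (da + db i) (xi i)) /\
    (forall i, d (xi i) = a * b i) /\
    cohom u (\sum_(i < n) \prod_(j < n)
               (if (j < i)%N then bar_m1 (da + db j) (xi j)
                else if j == i then b i else xi j)).

(* u represents an element of the triple Massey product <x1, x2, x3>,
   with |x_i| = d_i; x12 \in A^{d1+d2-1}, x23 \in A^{d2+d3-1}. *)
Definition triple_rep (x1 : A) (d1 : nat) (x2 : A) (d2 : nat)
    (x3 : A) (d3 : nat) (u : A) : Prop :=
  exists x12 x23 : A,
    in_degm1 (d1 + d2) x12 /\ in_degm1 (d2 + d3) x23 /\
    d x12 = x1 * x2 /\ d x23 = x2 * x3 /\
    cohom u (x1 * x23 + (-1) ^+ d1.+1 * (x12 * x3)).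

End DGADefs.

(* Main.v *)
Require Import Defs.
From HB Require Import structures.
From mathcomp Require Import all_boot all_order all_algebra.
From mathcomp Require Import Rstruct.
From mathcomp Require Import zify ring.
Import Order.TTheory GRing.Theory Num.Theory.
Local Open Scope ring_scope.

Set Implicit Arguments.
Unset Strict Implicit.

Lemma sgn_comm (A : algType R) (k : nat) (x : A) : (-1) ^+ k * x = x * (-1) ^+ k.
Proof. by rewrite -signr_odd; case: (odd k); rewrite ?expr0 ?expr1 ?mul1r ?mulr1 ?mulN1r ?mulrN1. Qed.

Lemma sgn_sq (A : algType R) (k : nat) : ((-1) ^+ k : A) * (-1) ^+ k = 1.
Proof. by rewrite -signr_odd; case: (odd k); rewrite ?expr0 ?expr1 ?mul1r ?mulrNN ?mulr1. Qed.


Lemma dD (A : algType R) deg (d : A -> A) (HA : is_DGA deg d) x y : d (x + y) = d x + d y.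
Proof. by have := d_linear HA 1 x y; rewrite !scale1r. Qed.

Lemma d0 (A : algType R) deg (d : A -> A) (HA : is_DGA deg d) : d 0 = 0.
Proof. have := dD HA 0 0; rewrite addr0 => /eqP; rewrite -subr_eq0 opprD addrA subrr add0r oppr_eq0 => /eqP //. Qed.

Lemma dN (A : algType R) deg (d : A -> A) (HA : is_DGA deg d) x : d (- x) = - d x.
Proof. by have := d_linear HA (-1) x 0; rewrite addr0 (d0 HA) addr0 !scaleN1r. Qed.

Lemma dB (A : algType R) deg (d : A -> A) (HA : is_DGA deg d) x y : d (x - y) = d x - d y.
Proof. by rewrite (dD HA) (dN HA). Qed.

Lemma dsgn (A : algType R) deg (d : A -> A) (HA : is_DGA deg d) k x :
  d ((-1) ^+ k * x) = (-1) ^+ k * d x.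
Proof. by rewrite -signr_odd; case: (odd k); rewrite ?expr0 ?expr1 ?mul1r ?mulN1r ?(dN HA). Qed.

Lemma exact0 (A : algType R) deg (d : A -> A) (HA : is_DGA deg d) : is_exact d 0.
Proof. by exists 0; rewrite (d0 HA). Qed.

Lemma exactB (A : algType R) deg (d : A -> A) (HA : is_DGA deg d) x y :
  is_exact d x -> is_exact d y -> is_exact d (x - y).
Proof. by move=> [x' ->] [y' ->]; exists (x' - y'); rewrite (dB HA). Qed.

Lemma exactS (A : algType R) deg (d : A -> A) (HA : is_DGA deg d) k x :
  is_exact d x -> is_exact d ((-1) ^+ k * x).
Proof. by move=> [x' ->]; exists ((-1) ^+ k * x'); rewrite (dsgn HA). Qed.

Lemma cohom_refl (A : algType R) deg (d : A -> A) (HA : is_DGA deg d) u : cohom d u u.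
Proof. by rewrite /cohom subrr; apply: (exact0 HA). Qed.

Definition P (A : algType R) (deg : nat -> A -> Prop) (b : bool) (x : A) :=
  exists k, deg k x /\ odd k = b.

Lemma P0 (A : algType R) deg (d : A -> A) (HA : is_DGA deg d) b : P deg b 0.
Proof. by red; exists (nat_of_bool b); split; [exact: (deg0 HA _) | case: b]. Qed.

Lemma P1 (A : algType R) deg (d : A -> A) (HA : is_DGA deg d) : P deg false 1.
Proof. by red; exists 0%N; split => //; apply: deg1 HA. Qed.

Lemma PM (A : algType R) deg (d : A -> A) (HA : is_DGA deg d) b c x y :
  P deg b x -> P deg c y -> P deg (b (+) c) (x * y).
Proof. move=> [p [hp <-]] [q [hq <-]]; red; exists (p + q)%N; split; [exact: (degM HA hp hq) | by rewrite oddD]. Qed.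

Lemma Pcomm (A : algType R) deg (d : A -> A) (HA : is_DGA deg d) b c x y :
  P deg b x -> P deg c y -> x * y = (-1) ^+ (b && c) * (y * x).
Proof. move=> [p [hp <-]] [q [hq <-]]; rewrite (gcomm HA hp hq) -oddM signr_odd //. Qed.

Lemma deg_sgn (A : algType R) deg (d : A -> A) (HA : is_DGA deg d) k : deg 0%N ((-1) ^+ k : A).
Proof.
elim: k => [|k IH]; first by rewrite expr0; exact: (deg1 HA).
rewrite exprS; have h1 : deg 0%N (-1 : A).
  by rewrite -scaleN1r; apply: (degZ HA); exact: (deg1 HA).
exact: (degM HA h1 IH).
Qed.

Lemma PS (A : algType R) deg (d : A -> A) (HA : is_DGA deg d) b k x :
  P deg b x -> P deg b ((-1) ^+ k * x).
Proof. move=> [p [hp <-]]; red; exists p; split => //; exact: (degM HA (deg_sgn HA k) hp). Qed.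

Lemma Pm1 (A : algType R) deg (d : A -> A) (HA : is_DGA deg d) m x :
  in_degm1 deg m x -> P deg (~~ odd m) x.
Proof.
case: m => [/= ->|m /= h]; first exact: (P0 HA _).
by red; exists m; split => //; rewrite negbK.
Qed.

Lemma bar_sgn (A : algType R) deg m (x : A) :
  in_degm1 deg m x -> bar_m1 m x = (-1) ^+ (~~ odd m) * x.
Proof.
rewrite /bar_m1; case: m => [/= ->|m /= _]; first by rewrite !mulr0.
by rewrite negbK signr_odd.
Qed.

Lemma in_degm1B (A : algType R) deg (d : A -> A) (HA : is_DGA deg d) m x y :
  in_degm1 deg m x -> in_degm1 deg m y -> in_degm1 deg m (x - y).
Proof.
case: m => [/= -> -> |m /= hx hy]; first by rewrite subrr.
by rewrite -scaleN1r; apply: (degD HA) => //; apply: (degZ HA).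
Qed.

Lemma splitS (T : Type) (idx : T) (op : Monoid.law idx) (F : nat -> T) r n :
  (r <= n)%N ->
  \big[op/idx]_(0 <= i < n.+1) F i =
  op (\big[op/idx]_(0 <= i < r) F i) (op (F r) (\big[op/idx]_(r <= i < n) F i.+1)).
Proof.
move=> hr; rewrite (big_cat_nat _ (n := r)) //=; last by lia.
by rewrite big_nat_recl.
Qed.

Lemma splitB (T : Type) (idx : T) (op : Monoid.law idx) (F : nat -> T) r n :
  (r <= n)%N ->
  \big[op/idx]_(0 <= i < n) F (bump r i) =
  op (\big[op/idx]_(0 <= i < r) F i) (\big[op/idx]_(r <= i < n) F i.+1).
Proof.
move=> hr; rewrite (big_cat_nat _ (n := r)) //=.
f_equal; apply: eq_big_nat => i /andP [h1 h2]; rewrite /bump.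
  by have -> : (r <= i)%N = false by lia.
by rewrite h1 add1n.
Qed.

Lemma xor_count lo hi i : (lo <= hi)%N ->
  \big[addb/false]_(lo <= j < hi) (j.+1 == i) = (lo < i <= hi)%N.
Proof.
elim: hi => [|hi IH] h.
  have -> : lo = 0%N by lia.
  by rewrite big_geq //; case: i.
case: (ltngtP lo hi.+1) => [hlt| |<-]; last 2 first.
- lia.
- rewrite big_geq //; apply/esym/negbTE; lia.
rewrite big_nat_recr /=; last by lia.
rewrite IH; last by lia.
case: eqP => [<-|ne].
  by rewrite hlt ltnn leqnn.
rewrite addbF (leq_eqVlt i hi.+1) ltnS.
by have /negbTE -> : i != hi.+1 by apply/eqP => e; apply: ne.
Qed.

Lemma sgnZ (A : algType R) (k : nat) (x : A) : (-1) ^+ k * x = ((-1) ^+ k : R) *: x.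
Proof. by rewrite -signr_odd -[in RHS]signr_odd; case: (odd k); rewrite ?expr0 ?expr1 ?mul1r ?scale1r ?mulN1r ?scaleN1r. Qed.

Lemma Pprod (A : algType R) deg (d : A -> A) (HA : is_DGA deg d) (p : nat -> bool) (F : nat -> A) lo hi :
  (forall j, P deg (p j) (F j)) ->
  P deg (\big[addb/false]_(lo <= j < hi) p j) (\prod_(lo <= j < hi) F j).
Proof.
move=> h; apply: (big_ind2 (fun b x => P deg b x)) => //.
- exact: (P1 HA).
- by move=> ? ? ? ? ? ?; apply: (PM HA).
Qed.

Definition Tm (A : algType R) (m : nat -> nat) (bn x : nat -> A) (i j : nat) : A :=
  if (j < i)%N then bar_m1 (m j) (x j) else if j == i then bn i else x j.
Definition Sn (A : algType R) M (m : nat -> nat) (bn x : nat -> A) :=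
  \sum_(0 <= i < M) \prod_(0 <= j < M) Tm m bn x i j.
Definition Red (A : algType R) r M (m : nat -> nat) (bn x : nat -> A) :=
  \sum_(0 <= i < M) \prod_(0 <= j < M) Tm m bn x (bump r i) (bump r j).

Lemma PTm (A : algType R) deg (d : A -> A) (HA : is_DGA deg d) m bn x i j :
  (forall k, in_degm1 deg (m k) (x k)) -> (forall k, P deg (odd (m k)) (bn k)) ->
  P deg (~~ odd (m j) (+) (j == i)) (Tm m bn x i j).
Proof.
move=> hx hb; rewrite /Tm; case: ltnP => hji.
  rewrite (ltn_eqF hji) addbF (bar_sgn (hx j)); apply: (PS HA); exact: (Pm1 HA).
case: eqP => [->|_]; first by rewrite addbT negbK.
rewrite addbF; exact: (Pm1 HA).
Qed.


Lemma step_pt (A : algType R) deg (d : A -> A) (HA : is_DGA deg d)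
   (m : nat -> nat) (bn x x' : nat -> A) (n r i : nat) :
  (r <= n)%N -> (forall k, k != r -> x' k = x k) ->
  (forall k, in_degm1 deg (m k) (x k)) -> (forall k, in_degm1 deg (m k) (x' k)) ->
  (forall k, P deg (odd (m k)) (bn k)) ->
  i != r -> (i <= n)%N ->
  \prod_(0 <= j < n.+1) Tm m bn x' i j - \prod_(0 <= j < n.+1) Tm m bn x i j =
  \prod_(0 <= j < n) Tm m bn x' i (bump r j) *
    ((-1) ^+ (~~ odd (m r) && \big[addb/false]_(r <= j < n) ~~ odd (m j.+1)) * (x' r - x r)).
Proof.
move=> hr hxx hx hx' hb hir hin.
have eT : forall j, j != r -> Tm m bn x i j = Tm m bn x' i j.
  by move=> j hj; rewrite /Tm hxx.
rewrite !(splitS _ _ hr) (splitB _ (fun j => Tm m bn x' i j) hr).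
have -> : \prod_(0 <= j < r) Tm m bn x i j = \prod_(0 <= j < r) Tm m bn x' i j.
  apply: eq_big_nat => j hj; apply: eT; apply/eqP; lia.
have -> : \prod_(r <= j < n) Tm m bn x i j.+1 = \prod_(r <= j < n) Tm m bn x' i j.+1.
  apply: eq_big_nat => j hj; apply: eT; apply/eqP; lia.
set L := \prod_(0 <= j < r) _.
set Rr := \prod_(r <= j < n) _.
set c := x' r - x r.
have hc : in_degm1 deg (m r) c by apply: (in_degm1B HA).
have eTr : Tm m bn x' i r - Tm m bn x i r = (-1) ^+ ((r < i)%N && ~~ odd (m r)) * c.
  rewrite /Tm; case: ltnP => hri.
    by rewrite (bar_sgn (hx' r)) (bar_sgn (hx r)) -mulrBr.
  have /negbTE -> : r != i by rewrite eq_sym.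
  by rewrite mul1r.
have pR : P deg (\big[addb/false]_(r <= j < n) ~~ odd (m j.+1) (+) (r < i)%N) Rr.
  have -> : (r < i)%N = \big[addb/false]_(r <= j < n) (j.+1 == i).
    rewrite xor_count //; apply/esym; lia.
  rewrite -big_split /=; apply: (Pprod HA) => j; exact: (PTm HA).
have cR := Pcomm HA (Pm1 HA hc) pR.
rewrite -mulrBr -mulrBl eTr -mulrA cR (mulrA ((-1) ^+ _)) -signr_addb.
rewrite (_ : _ (+) _ = ~~ odd (m r) && \big[addb/false]_(r <= j < n) ~~ odd (m j.+1)); last first.
  by case: (r < i)%N; case: (~~ odd (m r)); case: (\big[addb/false]_(r <= j < n) ~~ odd (m j.+1)).
by rewrite !sgnZ -!scalerAr mulrA.
Qed.

Lemma step (A : algType R) deg (d : A -> A) (HA : is_DGA deg d)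
   (m : nat -> nat) (bn x x' : nat -> A) (n r : nat) :
  (r <= n)%N -> (forall k, k != r -> x' k = x k) ->
  (forall k, in_degm1 deg (m k) (x k)) -> (forall k, in_degm1 deg (m k) (x' k)) ->
  (forall k, P deg (odd (m k)) (bn k)) ->
  Sn n.+1 m bn x' - Sn n.+1 m bn x =
  Red r n m bn x' *
    ((-1) ^+ (~~ odd (m r) && \big[addb/false]_(r <= j < n) ~~ odd (m j.+1)) * (x' r - x r)).
Proof.
move=> hr hxx hx hx' hb.
set c' := (_ * (x' r - x r)).
rewrite /Sn /Red -sumrB mulr_suml (splitS _ _ hr).
have := splitB _ (fun i => \prod_(0 <= j < n) Tm m bn x' i (bump r j) * c') hr.
move=> /= ->.
rewrite (_ : \prod_(0 <= j < n.+1) Tm m bn x' r j = \prod_(0 <= j < n.+1) Tm m bn x r j); last first.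
  apply: eq_bigr => j _; rewrite /Tm; case: ltnP => hj.
    by rewrite hxx //; apply/eqP; lia.
  case: eqP => // /eqP hj'; by rewrite hxx.
rewrite subrr add0r; apply: f_equal2; apply: eq_big_nat => i hi; apply: (step_pt HA) => //; apply/eqP; lia.
Qed.

Lemma Sn_ext (A : algType R) M (m : nat -> nat) (bn x y : nat -> A) :
  (forall k, (k < M)%N -> x k = y k) -> Sn M m bn x = Sn M m bn y.
Proof.
move=> h; apply: eq_big_nat => i hi; apply: eq_big_nat => j hj.
by rewrite /Tm !h.
Qed.

Definition zz (A : algType R) (x x' : nat -> A) t k := if (k < t)%N then x' k else x k.

Lemma tele (A : algType R) deg (d : A -> A) (HA : is_DGA deg d)
   (m : nat -> nat) (bn x x' : nat -> A) (n : nat) :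
  (forall k, in_degm1 deg (m k) (x k)) -> (forall k, in_degm1 deg (m k) (x' k)) ->
  (forall k, P deg (odd (m k)) (bn k)) ->
  Sn n.+1 m bn x' - Sn n.+1 m bn x =
  \sum_(0 <= t < n.+1) Red t n m bn (zz x x' t.+1) *
    ((-1) ^+ (~~ odd (m t) && \big[addb/false]_(t <= j < n) ~~ odd (m j.+1)) * (x' t - x t)).
Proof.
move=> hx hx' hb.
have -> : Sn n.+1 m bn x' = Sn n.+1 m bn (zz x x' n.+1).
  by apply: Sn_ext => k hk; rewrite /zz hk.
have -> : Sn n.+1 m bn x = Sn n.+1 m bn (zz x x' 0) by [].
rewrite (telescope_sumr_eq (fun t => Sn n.+1 m bn (zz x x' t))) // => t ht.
have hz : forall s k, in_degm1 deg (m k) (zz x x' s k).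
  by move=> s k; rewrite /zz; case: ifP.
rewrite (step HA (r := t)) //.
- by rewrite /zz ltnn leqnn.
- move=> k hk; rewrite /zz; case: (ltngtP k t) => hkt.
  + by have -> : (k < t.+1)%N by lia.
  + by have -> : (k < t.+1)%N = false by lia.
  + by rewrite hkt eqxx in hk.
Qed.


Lemma sub4 (V : zmodType) (u u' s s' : V) : u - u' - (s - s') = (u - s) - (u' - s').
Proof. by rewrite !opprB !addrA addrAC [RHS]addrAC [u - s - _]addrAC. Qed.

Lemma conv (A : algType R) M (F : 'I_M -> 'I_M -> A) (H : nat -> nat -> A) :
  (forall i j : 'I_M, F i j = H i j) ->
  \sum_(i < M) \prod_(j < M) F i j = \sum_(0 <= i < M) \prod_(0 <= j < M) H i j.
Proof.
move=> h; rewrite big_mkord; apply: eq_bigr => i _.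
by rewrite big_mkord; apply: eq_bigr => j _.
Qed.

Lemma inord_bump n (j : 'I_n.+1) (k : 'I_n) : (inord (bump j k) : 'I_n.+1) = lift j k.
Proof. exact: inord_val (lift j k). Qed.

Lemma ltn_bump2 h i j : (bump h i < bump h j)%N = (i < j)%N.
Proof. by rewrite !ltnNge leq_bump2. Qed.

Lemma part1 (A : algType R) (deg : nat -> A -> Prop) (d : A -> A)
    (HA : is_DGA deg d) :
  (forall (n : nat) (a : A) (da : nat) (b : 'I_n.+1 -> A) (db : 'I_n.+1 -> nat),
     deg da a -> ~~ odd da -> is_closed d a ->
     (forall i, deg (db i) (b i)) -> (forall i, is_closed d (b i)) ->
     (forall i, is_exact d (a * b i)) ->
     forall u u' : A,
       amassey_rep deg d a da b db u -> amassey_rep deg d a da b db u' ->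
       exists y h : 'I_n.+1 -> A,
         (forall j : 'I_n.+1, amassey_rep deg d a da
              (fun k : 'I_n => b (lift j k)) (fun k : 'I_n => db (lift j k)) (y j)) /\
         (forall j, is_closed d (h j)) /\
         cohom d (u - u') (\sum_(j < n.+1) y j * h j)).
Proof.
move=> n a da b db ha hda hca hb hcb hab u u' [xi [hxi [dxi cu]]] [xi' [hxi' [dxi' cu']]].
pose m k := (da + db (inord k))%N.
pose bn k := b (inord k).
pose x k := xi (inord k).
pose x' k := xi' (inord k).
have hx : forall k, in_degm1 deg (m k) (x k) by move=> k; exact: hxi.
have hx' : forall k, in_degm1 deg (m k) (x' k) by move=> k; exact: hxi'.
have hbn : forall k, P deg (odd (m k)) (bn k).
  move=> k; exists (db (inord k)); split; first exact: hb.
  by rewrite /m oddD (negbTE hda).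
pose eps t := ((-1) ^+ (~~ odd (m t) && \big[addb/false]_(t <= j < n) ~~ odd (m j.+1)) : A).
exists (fun j : 'I_n.+1 => Red j n m bn (zz x x' j.+1)).
exists (fun j : 'I_n.+1 => - (eps j * (x' j - x j))).
have convU : forall xs : 'I_n.+1 -> A,
   \sum_(i < n.+1) \prod_(j < n.+1)
      (if (j < i)%N then bar_m1 (da + db j) (xs j) else if j == i then b i else xs j)
   = Sn n.+1 m bn (fun k => xs (inord k)).
  move=> xs; apply: conv => i j.
  by rewrite /Tm /m /bn !inord_val.
split; [|split].
- move=> j; exists (fun k : 'I_n => zz x x' j.+1 (bump j k)); split; [|split].
  + move=> k; rewrite /zz; case: ifP => _; rewrite /x /x' inord_bump; [exact: hxi'|exact: hxi].
  + move=> k; rewrite /zz; case: ifP => _; rewrite /x /x' inord_bump; [exact: dxi'|exact: dxi].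
  + rewrite /Red; rewrite (conv (H := fun i k => Tm m bn (zz x x' j.+1) (bump j i) (bump j k))).
      exact: (cohom_refl HA).
    move=> i k; rewrite /Tm ltn_bump2 (inj_eq (can_inj (bumpK j))) /m /bn !inord_bump //.
- move=> j; rewrite /is_closed (dN HA) /eps (dsgn HA) (dB HA) /x /x' !inord_val dxi dxi' subrr mulr0 oppr0 //.
have -> : \sum_(j < n.+1) Red j n m bn (zz x x' j.+1) * - (eps j * (x' j - x j))
          = Sn n.+1 m bn x - Sn n.+1 m bn x'.
  rewrite -opprB (tele HA _ hx hx' hbn) big_mkord -sumrN; apply: eq_bigr => t _.
  by rewrite mulrN.
rewrite /cohom sub4.
apply: (exactB HA).
  by move: cu; rewrite /cohom convU.
by move: cu'; rewrite /cohom convU.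
Qed.


Lemma amassey2 (A : algType R) (deg : nat -> A -> Prop) (d : A -> A) a da
   (b : 'I_2 -> A) (db : 'I_2 -> nat) u :
  amassey_rep deg d a da b db u ->
  exists xi0 xi1, in_degm1 deg (da + db ord0) xi0 /\ in_degm1 deg (da + db ord_max) xi1 /\
    d xi0 = a * b ord0 /\ d xi1 = a * b ord_max /\
    cohom d u (b ord0 * xi1 + bar_m1 (da + db ord0) xi0 * b ord_max).
Proof.
move=> [xi [h1 [h2 h3]]]; exists (xi ord0), (xi ord_max); split; [|split; [|split; [|split]]] => //.
move: h3; rewrite !big_ord_recr !big_ord0 /= !mul1r !add0r.
have -> : widen_ord (m:=2) (leqnSn 1) ord_max = ord0 by apply/val_inj.
by [].
Qed.

Lemma comm_a (A : algType R) (deg : nat -> A -> Prop) (d : A -> A) (HA : is_DGA deg d)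
   a da x dx : deg da a -> ~~ odd da -> deg dx x -> x * a = a * x.
Proof.
move=> ha hda hx; rewrite (gcomm HA hx ha) -signr_odd oddM (negbTE hda) andbF expr0 mul1r //.
Qed.

Lemma trip1 (A : algType R) (deg : nat -> A -> Prop) (d : A -> A) (HA : is_DGA deg d)
   a da x1 d1 x2 d2 xi0 xi1 u :
  deg da a -> ~~ odd da -> deg d1 x1 -> deg d2 x2 ->
  in_degm1 deg (da + d1) xi0 -> in_degm1 deg (da + d2) xi1 ->
  d xi0 = a * x1 -> d xi1 = a * x2 ->
  cohom d u (x1 * xi1 + bar_m1 (da + d1) xi0 * x2) ->
  triple_rep deg d x1 d1 a da x2 d2 u.
Proof.
move=> ha hda h1 h2 h0 h1' e0 e1 c.
exists xi0, xi1; split; [by rewrite addnC|split; [by []|split; [|split]]].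
- by rewrite e0 (comm_a HA ha hda h1).
- by [].
move: c; rewrite (bar_sgn h0) -mulrA oddD (negbTE hda) /=.
by rewrite -[(-1) ^+ d1.+1]signr_odd /=.
Qed.

Lemma trip2 (A : algType R) (deg : nat -> A -> Prop) (d : A -> A) (HA : is_DGA deg d)
   a da x1 d1 x2 d2 xi0 xi1 u :
  deg da a -> ~~ odd da -> deg d1 x1 -> deg d2 x2 ->
  in_degm1 deg (da + d1) xi0 -> in_degm1 deg (da + d2) xi1 ->
  d xi0 = a * x1 -> d xi1 = a * x2 ->
  cohom d u (x1 * xi1 + bar_m1 (da + d1) xi0 * x2) ->
  triple_rep deg d x2 d2 a da x1 d1
     ((-1) ^+ ((odd d1 && odd d2) (+) odd d1 (+) odd d2 (+) true) * u).
Proof.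
move=> ha hda h1 h2 h0 h1' e0 e1 c.
exists xi1, xi0; split; [by rewrite addnC|split; [by []|split; [|split]]].
- by rewrite e1 (comm_a HA ha hda h2).
- by [].
have p1 : P deg (odd d1) x1 by exists d1.
have p2 : P deg (odd d2) x2 by exists d2.
have q0 := Pm1 HA h0; have q1 := Pm1 HA h1'.
rewrite (bar_sgn h0) (Pcomm HA p1 q1) -mulrA (Pcomm HA q0 p2) in c.
rewrite !oddD (negbTE hda) /= in c q0 q1 *.
set e := (_ (+) true).
move: c; set S := (X in cohom d u X) => c.
have -> : x2 * xi0 + (-1) ^+ d2.+1 * (xi1 * x1) = (-1) ^+ e * S.
  rewrite /S /e mulrDr !(mulrA ((-1) ^+ _) ((-1) ^+ _)) -!signr_addb -[(-1) ^+ d2.+1]signr_odd /=.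
  case: (odd d1); case: (odd d2); rewrite /= ?expr0 ?expr1 ?mul1r ?mulN1r.
  1-4: by rewrite ?opprK addrC.
move: c; rewrite /cohom => c.
rewrite -mulrBr; exact: (exactS HA).
Qed.

Unset Implicit Arguments.

Theorem proposition2p7 (A : algType R) (deg : nat -> A -> Prop) (d : A -> A)
    (HA : is_DGA deg d) :
  (* general statement, n >= 1 *)
  (forall (n : nat) (a : A) (da : nat) (b : 'I_n.+1 -> A) (db : 'I_n.+1 -> nat),
     deg da a -> ~~ odd da -> is_closed d a ->
     (forall i, deg (db i) (b i)) -> (forall i, is_closed d (b i)) ->
     (forall i, is_exact d (a * b i)) ->
     forall u u' : A,
       amassey_rep deg d a da b db u -> amassey_rep deg d a da b db u' ->
       exists y h : 'I_n.+1 -> A,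
         (forall j : 'I_n.+1, amassey_rep deg d a da
              (fun k : 'I_n => b (lift j k)) (fun k : 'I_n => db (lift j k)) (y j)) /\
         (forall j, is_closed d (h j)) /\
         cohom d (u - u') (\sum_(j < n.+1) y j * h j))
  /\
  (* the case n = 3, in terms of ordinary triple Massey products *)
  (forall (a : A) (da : nat) (b1 b2 b3 : A) (db1 db2 db3 : nat),
     deg da a -> ~~ odd da -> is_closed d a ->
     deg db1 b1 -> deg db2 b2 -> deg db3 b3 ->
     is_closed d b1 -> is_closed d b2 -> is_closed d b3 ->
     is_exact d (a * b1) -> is_exact d (a * b2) -> is_exact d (a * b3) ->
     forall u u' : A,
       amassey_rep deg d a da (fun i : 'I_3 => [:: b1; b2; b3]`_i)
                   (fun i : 'I_3 => nth 0%N [:: db1; db2; db3] i) u ->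
       amassey_rep deg d a da (fun i : 'I_3 => [:: b1; b2; b3]`_i)
                   (fun i : 'I_3 => nth 0%N [:: db1; db2; db3] i) u' ->
       exists y1 y2 y3 h1 h2 h3 : A,
         triple_rep deg d b1 db1 a da b2 db2 y1 /\
         triple_rep deg d b2 db2 a da b3 db3 y2 /\
         triple_rep deg d b3 db3 a da b1 db1 y3 /\
         is_closed d h1 /\ is_closed d h2 /\ is_closed d h3 /\
         cohom d (u - u') (y1 * h1 + y2 * h2 + y3 * h3)).
Proof.
split; first exact: (part1 HA).
move=> a da b1 b2 b3 db1 db2 db3 ha hda hca hb1 hb2 hb3 hc1 hc2 hc3 he1 he2 he3 u u' hu hu'.
have [y [h [hy [hh hc]]]] := part1 HA ha hda hca
   (b := fun i : 'I_3 => [:: b1; b2; b3]`_i) (db := fun i : 'I_3 => nth 0%N [:: db1; db2; db3] i)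
   ltac:(by case=> [[|[|[|?]]] ?]) ltac:(by case=> [[|[|[|?]]] ?]) ltac:(by case=> [[|[|[|?]]] ?]) hu hu'.
have [x0 [x1 [g0 [g1 [f0 [f1 c]]]]]] := amassey2 (hy ord_max).
have [x0' [x1' [g0' [g1' [f0' [f1' c']]]]]] := amassey2 (hy ord0).
have [x0'' [x1'' [g0'' [g1'' [f0'' [f1'' c'']]]]]] := amassey2 (hy (@Ordinal 3 1 isT)).
simpl in *.
set j1 := Ordinal (n:=3) (m:=1) isT.
set eb := ((odd db1 && odd db3) (+) odd db1 (+) odd db3 (+) true).
exists (y ord_max), (y ord0), ((-1) ^+ eb * y j1), (h ord_max), (h ord0), ((-1) ^+ eb * h j1).
split; first exact: (trip1 HA ha hda hb1 hb2 g0 g1 f0 f1 c).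
split; first exact: (trip1 HA ha hda hb2 hb3 g0' g1' f0' f1' c').
split; first exact: (trip2 HA ha hda hb1 hb3 g0'' g1'' f0'' f1'' c'').
split; first exact: hh.
split; first exact: hh.
split; first by rewrite /is_closed (dsgn HA) hh mulr0.
move: hc; rewrite !big_ord_recr big_ord0 /=.
have -> : (-1) ^+ eb * y j1 * ((-1) ^+ eb * h j1) = y j1 * h j1.
  by rewrite !sgnZ -scalerAl -scalerAr scalerA -signr_addb addbb expr0 scale1r.
have -> : widen_ord (m:=3) (leqnSn 2) (widen_ord (m:=2) (leqnSn 1) ord_max) = ord0 by apply/val_inj.
have -> : widen_ord (m:=3) (leqnSn 2) ord_max = j1 by apply/val_inj.
by rewrite add0r [X in cohom _ _ X -> _]addrC addrA.
Qed.
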